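(* Let $F$ be a field of characteristic $2$ and let $a,b\in F$ with $[F^2(a,b):F^2]=4$. Let $\beta=\langle a+1,a,b,ab\rangle_b$ be the diagonal bilinear form. Then $\beta$ is anisotropic, $G_F(q_\beta)=F^2(a,b)^*$, and $G_F(\beta)=F^2(a)^*$. In particular, $G_F(\beta)\subsetneq G_F(q_\beta)$.
   Context: $\langle c_1,\dots,c_n\rangle_b$ denotes the diagonal bilinear form $\sum c_ix_iy_i$. For a bilinear form $\beta$ on $V$, $q_\beta$ is the totally singular quadratic form $x\mapsto\beta(x,x)$. For a bilinear or quadratic form $\psi$, $G_F(\psi)=\{c\in F^*:\psi\cong c\psi\}$ is its group of similarity factors. *)

(* Defs.v *)
From HB Require Import structures.
From mathcomp Require Import all_boot all_order all_algebra.
Set Implicit Arguments. Unset Strict Implicit. Unset Printing Implicit Defensive.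
Import Order.TTheory GRing.Theory Num.Theory.
Local Open Scope ring_scope.

Section Defs.
Variable F : fieldType.

Definition is_subfield (P : F -> Prop) : Prop :=
  [/\ P 0, P 1,
      (forall x y, P x -> P y -> P (x - y)),
      (forall x y, P x -> P y -> P (x * y)) &
      (forall x, P x -> x != 0 -> P x^-1)].

Definition gen_field (S : F -> Prop) (x : F) : Prop :=
  forall P : F -> Prop, is_subfield P -> (forall y, S y -> P y) -> P x.

Definition Fsq (x : F) : Prop := exists y : F, x = y ^+ 2.

Definition Fsq_adj1 (a : F) : F -> Prop :=
  gen_field (fun y => Fsq y \/ y = a).
Definition Fsq_adj2 (a b : F) : F -> Prop :=
  gen_field (fun y => [\/ Fsq y, y = a | y = b]).

Definition ext_degree (K L : F -> Prop) (n : nat) : Prop :=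
  (forall x, K x -> L x) /\
  exists e : 'I_n -> F, (forall i, L (e i)) /\
    forall x, L x ->
      exists! lam : {ffun 'I_n -> F},
        (forall i, K (lam i)) /\ x = \sum_(i < n) lam i * e i.

Definition bform (n : nat) (B : 'M[F]_n) (x y : 'rV[F]_n) : F :=
  (x *m B *m y^T) 0 0.

Definition diag_bform (n : nat) (c : 'I_n -> F) : 'M[F]_n :=
  diag_mx (\row_i c i).

Definition bform_anisotropic (n : nat) (B : 'M[F]_n) : Prop :=
  forall x : 'rV[F]_n, x != 0 -> bform B x x != 0.

Definition bform_iso (n : nat) (B1 B2 : 'M[F]_n) : Prop :=
  exists M : 'M[F]_n, M \in unitmx /\
    forall x y : 'rV[F]_n, bform B2 x y = bform B1 (x *m M) (y *m M).

Definition qform_iso (n : nat) (q1 q2 : 'rV[F]_n -> F) : Prop :=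
  exists M : 'M[F]_n, M \in unitmx /\
    forall x : 'rV[F]_n, q2 x = q1 (x *m M).

Definition q_of (n : nat) (B : 'M[F]_n) : 'rV[F]_n -> F := fun x => bform B x x.

Definition G_bform (n : nat) (B : 'M[F]_n) (c : F) : Prop :=
  c != 0 /\ bform_iso B (c *: B).
Definition G_qform (n : nat) (q : 'rV[F]_n -> F) (c : F) : Prop :=
  c != 0 /\ qform_iso q (fun x => c * q x).

End Defs.

(* Main.v *)
Require Import Defs.
From HB Require Import structures.
From mathcomp Require Import all_boot all_order all_algebra.
From mathcomp Require Import ring.
Import GRing.Theory.
Set Implicit Arguments. Unset Strict Implicit.
Local Open Scope ring_scope.

Lemma char2_eq (F : fieldType) (X Y Z : F) :
  2%:R = 0 :> F -> X - Y = 2%:R * Z -> X = Y.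
Proof. by move=> h2 /eqP; rewrite h2 mul0r subr_eq0 => /eqP. Qed.

Lemma gen_sub (F : fieldType) (S : F -> Prop) : is_subfield (gen_field S).
Proof.
split.
- by move=> P [].
- by move=> P [].
- move=> x y Hx Hy P HP HS; have [_ _ HB _ _] := HP.
  by apply: HB; [apply: Hx | apply: Hy].
- move=> x y Hx Hy P HP HS; have [_ _ _ HM _] := HP.
  by apply: HM; [apply: Hx | apply: Hy].
- move=> x Hx nx P HP HS; have [_ _ _ _ HI] := HP.
  by apply: HI => //; apply: Hx.
Qed.

Lemma gen_incl (F : fieldType) (S : F -> Prop) y : S y -> gen_field S y.
Proof. by move=> Sy P _ HS; apply: HS. Qed.

Lemma sf0 (F : fieldType) (P : F -> Prop) (HP : is_subfield P) : P 0. Proof. by case: HP. Qed.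
Lemma sf1 (F : fieldType) (P : F -> Prop) (HP : is_subfield P) : P 1. Proof. by case: HP. Qed.
Lemma sfB (F : fieldType) (P : F -> Prop) (HP : is_subfield P) x y : P x -> P y -> P (x - y). Proof. by case: HP => _ _ H _ _; apply: H. Qed.
Lemma sfN (F : fieldType) (P : F -> Prop) (HP : is_subfield P) x : P x -> P (- x). Proof. by move=> Hx; rewrite -sub0r; apply: sfB => //; apply: sf0. Qed.
Lemma sfD (F : fieldType) (P : F -> Prop) (HP : is_subfield P) x y : P x -> P y -> P (x + y).
Proof. by move=> Hx Hy; rewrite -[y]opprK; apply: sfB => //; apply: sfN. Qed.
Lemma sfM (F : fieldType) (P : F -> Prop) (HP : is_subfield P) x y : P x -> P y -> P (x * y). Proof. by case: HP => _ _ _ H _; apply: H. Qed.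
Lemma sfV (F : fieldType) (P : F -> Prop) (HP : is_subfield P) x : P x -> x != 0 -> P x^-1. Proof. by case: HP => _ _ _ _ H; apply: H. Qed.
Lemma sfX (F : fieldType) (P : F -> Prop) (HP : is_subfield P) x n : P x -> P (x ^+ n).
Proof. by move=> Hx; elim: n => [|n IH]; [rewrite expr0; apply: sf1 | rewrite exprS; apply: sfM]. Qed.


Definition Q (F : fieldType) (a b t0 t1 t2 t3 : F) :=
  t0^+2 + a*t1^+2 + b*t2^+2 + a*b*t3^+2.
Definition S2 (F : fieldType) (a b x : F) := exists t0 t1 t2 t3, x = Q a b t0 t1 t2 t3.
Definition S1 (F : fieldType) (a x : F) := exists u v, x = u^+2 + a*v^+2.

Lemma QZ (F : fieldType) (a b k t0 t1 t2 t3 : F) :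
  Q a b (k*t0) (k*t1) (k*t2) (k*t3) = k^+2 * Q a b t0 t1 t2 t3.
Proof. rewrite /Q; ring. Qed.

Lemma inv_sq (F : fieldType) (x : F) : x != 0 -> x^-1 = x^-1^+2 * x.
Proof. by move=> nx; rewrite expr2 -mulrA mulVf ?mulr1. Qed.

Lemma S2_sub (F : fieldType) (a b : F) : 2%:R = 0 :> F -> is_subfield (S2 a b).
Proof.
move=> h2; split.
- by exists 0, 0, 0, 0; rewrite /Q; ring.
- by exists 1, 0, 0, 0; rewrite /Q; ring.
- move=> x y [t0 [t1 [t2 [t3 ->]]]] [s0 [s1 [s2 [s3 ->]]]].
  exists (t0-s0), (t1-s1), (t2-s2), (t3-s3); rewrite /Q.
  apply: (@char2_eq _ _ _ ((a * b * s3 * t3) - (a * b * s3^+2) + (a * s1 * t1) - (a * s1^+2) + (b * s2 * t2) - (b * s2^+2) + (s0 * t0) - (s0^+2))) => //; ring.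
- move=> x y [t0 [t1 [t2 [t3 ->]]]] [s0 [s1 [s2 [s3 ->]]]].
  exists (t0*s0+a*t1*s1+b*t2*s2+a*b*t3*s3), (t0*s1+t1*s0+b*(t2*s3+t3*s2)),
    (t0*s2+t2*s0+a*(t1*s3+t3*s1)), (t0*s3+t3*s0+t1*s2+t2*s1); rewrite /Q.
  apply: (@char2_eq _ _ _ (- (2%:R * a * b * s0 * s1 * t2 * t3) - (2%:R * a * b * s0 * s2 * t1 * t3) - (2%:R * a * b * s0 * s3 * t0 * t3) - (2%:R * a * b * s0 * s3 * t1 * t2) - (2%:R * a * b * s1 * s2 * t0 * t3) - (2%:R * a * b * s1 * s2 * t1 * t2) - (2%:R * a * b * s1 * s3 * t0 * t2) - (2%:R * a * b * s2 * s3 * t0 * t1) - (2%:R * a * b^+2 * s2 * s3 * t2 * t3) - (2%:R * a * s0 * s1 * t0 * t1) - (2%:R * a^+2 * b * s1 * s3 * t1 * t3) - (2%:R * b * s0 * s2 * t0 * t2))) => //; ring.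
- move=> x [t0 [t1 [t2 [t3 Ex]]]] nx.
  exists (x^-1*t0), (x^-1*t1), (x^-1*t2), (x^-1*t3).
  by rewrite QZ -Ex -inv_sq.
Qed.

Lemma S1_sub (F : fieldType) (a : F) : 2%:R = 0 :> F -> is_subfield (S1 a).
Proof.
move=> h2; split.
- by exists 0, 0; ring.
- by exists 1, 0; ring.
- move=> x y [u [v ->]] [w [z ->]].
  exists (u-w), (v-z).
  apply: (@char2_eq _ _ _ ((a * v * z) - (a * z^+2) + (u * w) - (w^+2))) => //; ring.
- move=> x y [u [v ->]] [w [z ->]].
  exists (u*w+a*v*z), (u*z+v*w).
  apply: (@char2_eq _ _ _ (- (2%:R * a * u * v * w * z))) => //; ring.
- move=> x [u [v Ex]] nx.
  exists (x^-1*u), (x^-1*v).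
  apply: (etrans (inv_sq nx)); apply: (etrans (congr1 (fun z => x^-1^+2 * z) Ex)); ring.
Qed.

Lemma Fsq_adj2E (F : fieldType) (a b x : F) : 2%:R = 0 :> F ->
  Fsq_adj2 a b x <-> S2 a b x.
Proof.
move=> h2; split.
- move=> Hx; apply: Hx; first exact: S2_sub.
  move=> y [[z ->]|->|->].
  + by exists z, 0, 0, 0; rewrite /Q; ring.
  + by exists 0, 1, 0, 0; rewrite /Q; ring.
  + by exists 0, 0, 1, 0; rewrite /Q; ring.
- move=> [t0 [t1 [t2 [t3 ->]]]].
  have G := gen_sub (fun y => [\/ Fsq y, y = a | y = b]).
  have Hs z : Fsq_adj2 a b (z^+2) by apply: gen_incl; apply: Or31; exists z.
  have Ha : Fsq_adj2 a b a by apply: gen_incl; apply: Or32.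
  have Hb : Fsq_adj2 a b b by apply: gen_incl; apply: Or33.
  exact: (sfD G (sfD G (sfD G (Hs t0) (sfM G Ha (Hs t1))) (sfM G Hb (Hs t2))) (sfM G (sfM G Ha Hb) (Hs t3))).
Qed.

Lemma Fsq_adj1E (F : fieldType) (a x : F) : 2%:R = 0 :> F ->
  Fsq_adj1 a x <-> S1 a x.
Proof.
move=> h2; split.
- move=> Hx; apply: Hx; first exact: S1_sub.
  move=> y [[z ->]|->].
  + by exists z, 0; ring.
  + by exists 0, 1; ring.
- move=> [u [v ->]].
  have G := gen_sub (fun y => Fsq y \/ y = a).
  have Hs z : Fsq_adj1 a (z^+2) by apply: gen_incl; left; exists z.
  have Ha : Fsq_adj1 a a by apply: gen_incl; right.
  exact: (sfD G (Hs u) (sfM G Ha (Hs v))).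
Qed.

Definition o0 : 'I_4 := @Ordinal 4 0 erefl.
Definition o1 : 'I_4 := @Ordinal 4 1 erefl.
Definition o2 : 'I_4 := @Ordinal 4 2 erefl.
Definition o3 : 'I_4 := @Ordinal 4 3 erefl.

Lemma sum4 (F : fieldType) (g : 'I_4 -> F) : \sum_(i < 4) g i = g o0 + g o1 + g o2 + g o3.
Proof. by rewrite !big_ord_recl big_ord0 addr0 !addrA; congr (g _ + g _ + g _ + g _); apply: val_inj. Qed.

Lemma Fsq_add (F : fieldType) (x y : F) : 2%:R = 0 :> F -> Fsq x -> Fsq y -> Fsq (x + y).
Proof.
move=> h2 [u ->] [v ->]; exists (u + v).
by apply: (@char2_eq _ _ _ (- (u*v))) => //; ring.
Qed.

Lemma Fsq_mul (F : fieldType) (x y : F) : Fsq x -> Fsq y -> Fsq (x * y).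
Proof. by move=> [u ->] [v ->]; exists (u * v); rewrite exprMn. Qed.

Lemma Fsq_sum (F : fieldType) (g : 'I_4 -> F) : 2%:R = 0 :> F ->
  (forall i, Fsq (g i)) -> Fsq (\sum_(i < 4) g i).
Proof.
move=> h2 Hg; apply: (big_ind (@Fsq F)) => //; first by exists 0; rewrite expr0n.
by move=> x y; apply: Fsq_add.
Qed.

Lemma indep (F : fieldType) (a b : F) : 2%:R = 0 :> F ->
  ext_degree (@Fsq F) (Fsq_adj2 a b) 4 ->
  forall t0 t1 t2 t3, Q a b t0 t1 t2 t3 = 0 -> [/\ t0 = 0, t1 = 0, t2 = 0 & t3 = 0].
Proof.
move=> h2 [_ [e [He Hu]]] t0 t1 t2 t3 HQ.
have uniq_coord : forall x (l1 l2 : {ffun 'I_4 -> F}), Fsq_adj2 a b x ->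
    (forall i, Fsq (l1 i)) -> (forall i, Fsq (l2 i)) ->
    x = \sum_(i < 4) l1 i * e i -> x = \sum_(i < 4) l2 i * e i -> l1 = l2.
  move=> x l1 l2 Lx H1 H2 E1 E2.
  have [l0 [_ Hl0]] := Hu x Lx.
  by rewrite -(Hl0 l1 (conj H1 E1)) (Hl0 l2 (conj H2 E2)).
pose f (j : 'I_4) : F := [:: 1; a; b; a * b]`_j.
have Lf : forall j, Fsq_adj2 a b (f j).
  move=> j; apply/Fsq_adj2E => //.
  case: j => [[|[|[|[|//]]]] Hj]; rewrite /f /=.
  - by exists 1, 0, 0, 0; rewrite /Q; ring.
  - by exists 0, 1, 0, 0; rewrite /Q; ring.
  - by exists 0, 0, 1, 0; rewrite /Q; ring.
  - by exists 0, 0, 0, 1; rewrite /Q; ring.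
have HLam0 : forall j, exists lam : {ffun 'I_4 -> F},
    (forall k, Fsq (lam k)) /\ f j = \sum_(k < 4) lam k * e k.
  by move=> j; have [lam [Hl _]] := Hu (f j) (Lf j); exists lam.
have [Lam HLam] := fin_all_exists HLam0.
have HMu0 : forall i, exists m : {ffun 'I_4 -> F}, e i = \sum_(j < 4) m j ^+ 2 * f j.
  move=> i; have /Fsq_adj2E := He i => /(_ h2) [s0 [s1 [s2 [s3 E]]]].
  exists [ffun j : 'I_4 => [:: s0; s1; s2; s3]`_j].
  rewrite sum4 !ffunE /f /= E /Q; ring.
have [Mu HMu] := fin_all_exists HMu0.
have G := gen_sub (fun y => [\/ Fsq y, y = a | y = b]).
have expand : forall (m : 'I_4 -> F),
    \sum_(k < 4) [ffun k => \sum_(j < 4) m j * Lam j k] k * e k =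
    \sum_(j < 4) m j * f j.
  move=> m.
  under eq_bigr => k _ do rewrite ffunE big_distrl /=.
  rewrite exchange_big /=; apply: eq_bigr => j _.
  rewrite (proj2 (HLam j)) big_distrr /=; apply: eq_bigr => k _.
  by rewrite mulrA.
have FsqL : forall (m : 'I_4 -> F), (forall j, Fsq (m j)) ->
    forall k, Fsq ([ffun k => \sum_(j < 4) m j * Lam j k] k).
  move=> m Hm k; rewrite ffunE; apply: Fsq_sum => // j.
  by apply: Fsq_mul => //; apply: (proj1 (HLam j)).
pose LM : 'M[F]_4 := \matrix_(j, k) Lam j k.
pose A : 'M[F]_4 := \matrix_(i, j) (Mu i j) ^+ 2.
have AL : A *m LM = 1%:M.
  apply/matrixP => i k; rewrite !mxE.
  have := @uniq_coord (e i) [ffun k => \sum_(j < 4) (Mu i j)^+2 * Lam j k]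
      [ffun k => (i == k)%:R] (He i).
  move=> /(_ (FsqL _ (fun j => ex_intro _ _ erefl))).
  have Hd : forall k, Fsq ([ffun k : 'I_4 => (i == k)%:R] k : F).
    by move=> k'; rewrite ffunE; case: (i == k'); [exists 1 | exists 0]; rewrite ?expr1n ?expr0n.
  move=> /(_ Hd).
  rewrite expand -(HMu i) => /(_ erefl).
  have Ed : e i = \sum_(k < 4) [ffun k => (i == k)%:R] k * e k.
    rewrite (bigD1 i) //= ffunE eqxx mul1r big1 ?addr0 // => k' /negbTE.
    by rewrite ffunE eq_sym => ->; rewrite mul0r.
  move=> /(_ Ed) /ffunP /(_ k); rewrite !ffunE => <-.
  by apply: eq_bigr => j _; rewrite !mxE.
have [_ LMu] := mulmx1_unit AL.
pose tt (j : 'I_4) : F := [:: t0; t1; t2; t3]`_j.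
pose v : 'rV[F]_4 := \row_j (tt j) ^+ 2.
have vL : v *m LM = 0.
  apply/rowP => k; rewrite !mxE.
  have := @uniq_coord 0 [ffun k => \sum_(j < 4) (tt j)^+2 * Lam j k]
      [ffun k => 0] (sf0 G) (FsqL _ (fun j => ex_intro _ _ erefl)).
  have Z0 : forall k', Fsq ([ffun k : 'I_4 => (0:F)] k') by move=> k'; rewrite ffunE; exists 0; rewrite expr0n.
  move=> /(_ Z0).
  rewrite expand.
  have -> : \sum_(j < 4) tt j ^+ 2 * f j = 0.
    by rewrite sum4 /tt /f /= -HQ /Q; ring.
  move=> /(_ erefl).
  have E0 : (0 : F) = \sum_(k < 4) [ffun k : 'I_4 => (0 : F)] k * e k.
    by rewrite big1 // => k' _; rewrite ffunE mul0r.
  move=> /(_ E0) /ffunP /(_ k); rewrite !ffunE => Ek.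
  apply: (etrans _ Ek); by apply: eq_bigr => j _; rewrite !mxE.
have v0 : v = 0 by rewrite -(mulmxK LMu v) vL mul0mx.
have tj : forall j, tt j = 0.
  move=> j; have /rowP /(_ j) := v0; rewrite !mxE.
  by move/eqP; rewrite expf_eq0 /= => /eqP.
by split; [exact: (tj o0) | exact: (tj o1) | exact: (tj o2) | exact: (tj o3)].
Qed.

Definition Bt (F : fieldType) (a b : F) :=
  diag_bform (n := 4) [ffun i : 'I_4 => [:: a + 1; a; b; a * b]`_i].

Lemma bformE4 (F : fieldType) (a b : F) (x y : 'rV[F]_4) :
  bform (Bt a b) x y = (a+1) * (x 0 o0 * y 0 o0) + a * (x 0 o1 * y 0 o1)
    + b * (x 0 o2 * y 0 o2) + a * b * (x 0 o3 * y 0 o3).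
Proof.
rewrite /bform /Bt /diag_bform mul_mx_diag !mxE sum4 !mxE !ffunE /=; ring.
Qed.

Lemma bformZ (F : fieldType) n (B : 'M[F]_n) c x y :
  bform (c *: B) x y = c * bform B x y.
Proof. by rewrite /bform -scalemxAr -scalemxAl mxE. Qed.

Lemma mulE4 (F : fieldType) (x : 'rV[F]_4) (M : 'M[F]_4) j :
  (x *m M) 0 j = x 0 o0 * M o0 j + x 0 o1 * M o1 j + x 0 o2 * M o2 j + x 0 o3 * M o3 j.
Proof. by rewrite mxE sum4. Qed.

Definition mkrow (F : fieldType) (x0 x1 x2 x3 : F) : 'rV[F]_4 :=
  \row_(j < 4) [:: x0; x1; x2; x3]`_j.
Definition mkmx (F : fieldType) (L : seq (seq F)) : 'M[F]_4 :=
  \matrix_(i < 4, j < 4) (nth [::] L i)`_j.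

Lemma ord4_cases (P : 'I_4 -> Prop) : P o0 -> P o1 -> P o2 -> P o3 -> forall j, P j.
Proof.
move=> H0 H1 H2 H3 [[|[|[|[|//]]]] Hj].
- by rewrite (_ : Ordinal Hj = o0) //; apply: val_inj.
- by rewrite (_ : Ordinal Hj = o1) //; apply: val_inj.
- by rewrite (_ : Ordinal Hj = o2) //; apply: val_inj.
- by rewrite (_ : Ordinal Hj = o3) //; apply: val_inj.
Qed.

Lemma Q_sub (F : fieldType) (a b t0 t1 t2 t3 s0 s1 s2 s3 : F) : 2%:R = 0 :> F ->
  Q a b t0 t1 t2 t3 - Q a b s0 s1 s2 s3 = Q a b (t0-s0) (t1-s1) (t2-s2) (t3-s3).
Proof.
move=> h2; rewrite /Q.
by apply: (@char2_eq _ _ _ ((a * b * s3 * t3) - (a * b * s3^+2) + (a * s1 * t1) - (a * s1^+2) + (b * s2 * t2) - (b * s2^+2) + (s0 * t0) - (s0^+2))) => //; ring.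
Qed.

Lemma Q_inj (F : fieldType) (a b : F) : 2%:R = 0 :> F ->
  ext_degree (@Fsq F) (Fsq_adj2 a b) 4 ->
  forall t0 t1 t2 t3 s0 s1 s2 s3,
  Q a b t0 t1 t2 t3 = Q a b s0 s1 s2 s3 -> [/\ t0 = s0, t1 = s1, t2 = s2 & t3 = s3].
Proof.
move=> h2 hd t0 t1 t2 t3 s0 s1 s2 s3 /eqP; rewrite -subr_eq0 Q_sub // => /eqP.
by move/(indep h2 hd) => [/eqP h0 /eqP h1 /eqP h2' /eqP h3]; move: h0 h1 h2' h3;
  rewrite !subr_eq0 => /eqP -> /eqP -> /eqP -> /eqP ->.
Qed.

Lemma two0 (F : fieldType) : (2 \in [pchar F])%N -> 2%:R = 0 :> F.
Proof. exact: pcharf0. Qed.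

Unset Implicit Arguments.

Theorem mainTheorem3 (F : fieldType) (a b : F) :
  (2 \in [pchar F])%N ->
  ext_degree (@Fsq F) (Fsq_adj2 a b) 4 ->
  let beta := diag_bform (n := 4) [ffun i : 'I_4 => [:: a + 1; a; b; a * b]`_i] in
  [/\ bform_anisotropic beta,
      (forall c, G_qform (q_of beta) c <-> (c != 0 /\ Fsq_adj2 a b c)),
      (forall c, G_bform beta c <-> (c != 0 /\ Fsq_adj1 a c)) &
      ((forall c, G_bform beta c -> G_qform (q_of beta) c) /\
       exists c, G_qform (q_of beta) c /\ ~ G_bform beta c)].
Proof.
move=> hc hdeg beta.
have h2 := two0 hc.
have Ind := indep h2 hdeg.
have bE : forall x y, bform beta x y = (a+1) * (x 0 o0 * y 0 o0) + a * (x 0 o1 * y 0 o1)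
    + b * (x 0 o2 * y 0 o2) + a * b * (x 0 o3 * y 0 o3) := bformE4 a b.
have qE : forall x, bform beta x x = Q a b (x 0 o0) (x 0 o0 + x 0 o1) (x 0 o2) (x 0 o3).
  move=> x; rewrite bE /Q.
  by apply: (@char2_eq _ _ _ (- (a * x 0 o0 * x 0 o1))) => //; ring.
have aniso : forall x, bform beta x x = 0 -> x = 0.
  move=> x; rewrite qE => /Ind [h0 h1 h2' h3].
  move: h1; rewrite h0 add0r => h1.
  apply/rowP => j; rewrite mxE; move: j; apply: ord4_cases => //.
have bf00 : bform beta 0 0 = 0 by rewrite bE !mxE; ring.
have na : a != 0.
  apply/eqP => E; have [] := Ind 0 1 0 0; first by rewrite /Q E; ring.
  by move=> _ /eqP; rewrite oner_eq0.
have nb : b != 0.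
  apply/eqP => E; have [] := Ind 0 0 1 0; first by rewrite /Q E; ring.
  by move=> _ _ /eqP; rewrite oner_eq0.
have unitP : forall c (M : 'M[F]_4), c != 0 ->
    (forall x, c * bform beta x x = bform beta (x *m M) (x *m M)) -> M \in unitmx.
  move=> c M cn HM; rewrite -row_free_unit; apply: inj_row_free => w Hw.
  apply: aniso; have := HM w; rewrite Hw bf00 => /eqP; rewrite mulf_eq0 (negbTE cn) /=.
  by move/eqP.
have toS2 : forall c (M : 'M[F]_4),
    (forall x, c * bform beta x x = bform beta (x *m M) (x *m M)) -> S2 a b c.
  move=> c M HM.
  have S := S2_sub a b h2.
  have na1 : a + 1 != 0.
    apply/eqP => E; have : Q a b 1 1 0 0 = a + 1 by rewrite /Q; ring.
    by rewrite E => /Ind [/eqP]; rewrite oner_eq0.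
  have Sa1 : S2 a b (a + 1) by exists 1, 1, 0, 0; rewrite /Q; ring.
  have Sc : S2 a b (c * (a + 1)).
    have := HM (mkrow 1 0 0 0); rewrite [in X in X = _]bE !mxE /=.
    rewrite (_ : (a + 1) * (1 * 1) + a * (0 * 0) + b * (0 * 0) + a * b * (0 * 0) = a + 1); last by ring.
    move=> ->; rewrite qE; by do 4 eexists.
  rewrite -(mulfK na1 c); apply: (sfM S) => //; exact: (sfV S).
have P2 : forall c, G_qform (q_of beta) c <-> (c != 0 /\ Fsq_adj2 a b c).
  move=> c; split.
  - move=> [cn [M [Mu HM]]]; split => //; apply/Fsq_adj2E => //.
    by apply: (toS2 c M) => x; have := HM x; rewrite /q_of /=.
  - move=> [cn /(Fsq_adj2E _ _ _ h2) [t0 [t1 [t2 [t3 Ec]]]]]; split => //.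
    pose M := mkmx [:: [:: t0 + a*t1; (t1 + t0) - (t0 + a*t1); t2 + a*t3; t3 + t2];
                       [:: a*t1; t0 - a*t1; a*t3; t2];
                       [:: b*t2; b*t3 - b*t2; t0; t1];
                       [:: a*b*t3; b*t2 - a*b*t3; a*t1; t0]].
    have HM : forall x, c * bform beta x x = bform beta (x *m M) (x *m M).
      move=> x; rewrite !bE !mulE4 /M /mkmx !mxE /= Ec /Q.
      set x0 := x 0 o0; set x1 := x 0 o1; set x2 := x 0 o2; set x3 := x 0 o3.
      by apply: (@char2_eq _ _ _ (- (2%:R * a * b * t0 * t1 * x2 * x3) - (a * b * t0 * t2 * x0 * x2) - (a * b * t0 * t2 * x0 * x3) + (a * b * t0 * t2 * x1 * x2) - (2%:R * a * b * t0 * t2 * x1 * x3) - (a * b * t0 * t3 * x0 * x2) - (2%:R * a * b * t0 * t3 * x0 * x3) - (2%:R * a * b * t0 * t3 * x1 * x2) - (a * b * t1 * t2 * x0 * x2) - (2%:R * a * b * t1 * t2 * x0 * x3) - (2%:R * a * b * t1 * t2 * x1 * x2) - (2%:R * a * b * t1 * t3 * x0 * x2) - (2%:R * a * b * t2 * t3 * x0 * x1) - (2%:R * a * b * t2 * t3 * x0^+2) - (a * b * t2^+2 * x0 * x1) - (2%:R * a * b^+2 * t2 * t3 * x2 * x3) + (a * b^+2 * t2 * t3 * x2^+2) + (a * b^+2 * t2^+2 * x2 * x3) - (a * b^+2 * t2^+2 * x2^+2) - (2%:R * a * t0 * t1 * x0 * x1) - (a * t0 * t1 * x0^+2) - (a^+2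 * b * t0 * t3 * x0 * x3) + (a^+2 * b * t0 * t3 * x1 * x3) - (2%:R * a^+2 * b * t1 * t2 * x0 * x2) + (a^+2 * b * t1 * t2 * x0 * x3) - (2%:R * a^+2 * b * t1 * t2 * x1 * x2) + (a^+2 * b * t1 * t2 * x1 * x3) + (a^+2 * b * t1 * t3 * x0 * x2) - (a^+2 * b * t1 * t3 * x0 * x3) + (a^+2 * b * t1 * t3 * x1 * x2) - (2%:R * a^+2 * b * t1 * t3 * x1 * x3) - (a^+2 * b * t3^+2 * x0 * x1) - (2%:R * a^+2 * b^+2 * t2 * t3 * x2 * x3) + (a^+2 * b^+2 * t2 * t3 * x3^+2) + (a^+2 * b^+2 * t3^+2 * x2 * x3) - (a^+2 * t0 * t1 * x0^+2) + (a^+2 * t0 * t1 * x1^+2) + (a^+2 * t1^+2 * x0^+2) - (2%:R * a^+3 * b * t1 * t3 * x0 * x3) - (2%:R * a^+3 * b * t1 * t3 * x1 * x3) - (a^+3 * b^+2 * t3^+2 * x3^+2) - (2%:R * a^+3 * t1^+2 * x0 * x1) - (a^+3 * t1^+2 * x0^+2) - (a^+3 * t1^+2 * x1^+2) - (2%:R * b * t0 * t2 * x0 * x2))) => //; ring.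
    exists M; split; first exact: (unitP c M cn HM).
    by move=> x; rewrite /q_of /= HM.
have P3 : forall c, G_bform beta c <-> (c != 0 /\ Fsq_adj1 a c).
  move=> c; split.
  - move=> [cn [M [Mu HM]]]; split => //.
    have HM' : forall x y, c * bform beta x y = bform beta (x *m M) (y *m M).
      by move=> x y; rewrite -bformZ HM.
    have [t0 [t1 [t2 [t3 Ec]]]] := toS2 c M (fun x => HM' x x).
    set r := mkrow 0 0 1 0 *m M.
    set s := mkrow 0 0 0 1 *m M.
    have H22 := HM' (mkrow 0 0 1 0) (mkrow 0 0 1 0).
    have H33 := HM' (mkrow 0 0 0 1) (mkrow 0 0 0 1).
    have H23 := HM' (mkrow 0 0 1 0) (mkrow 0 0 0 1).
    rewrite -/r -/s in H22 H33 H23.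
    have [E0 E1 E2 E3] : [/\ b*t2 = r 0 o0, b*t3 = r 0 o0 + r 0 o1, t0 = r 0 o2 & t1 = r 0 o3].
      apply: (Q_inj h2 hdeg); rewrite -qE -H22 bE !mxE /= Ec /Q; ring.
    have [F0 F1 F2 F3] : [/\ a*b*t3 = s 0 o0, b*t2 = s 0 o0 + s 0 o1, a*t1 = s 0 o2 & t0 = s 0 o3].
      apply: (Q_inj h2 hdeg); rewrite -qE -H33 bE !mxE /= Ec /Q; ring.
    have R1 : r 0 o1 = b*t3 - b*t2 by rewrite E1 E0; ring.
    have S1' : s 0 o1 = b*t2 - a*b*t3 by rewrite F1 F0; ring.
    have key : a * b^+2 * Q a b t2 t3 0 0 = 0.
      have Z0 : c * bform beta (mkrow 0 0 1 0) (mkrow 0 0 0 1) = 0.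
        by rewrite bE !mxE /=; ring.
      apply: (etrans _ Z0); rewrite H23 bE R1 S1' -E0 -E2 -E3 -F0 -F2 -F3 /Q.
      by apply: (@char2_eq _ _ _ (- ((a * b * t0 * t1) + (a * b^+2 * t2 * t3) - (a * b^+2 * t2^+2) + (a^+2 * b^+2 * t2 * t3) - (a^+2 * b^+2 * t3^+2)))) => //; ring.
    move: key => /eqP; rewrite !mulf_eq0 (negbTE na) (negbTE nb) /= => /eqP.
    move=> /Ind [ht2 ht3 _ _].
    apply/Fsq_adj1E => //; exists t0, t1; rewrite Ec /Q ht2 ht3; ring.
  - move=> [cn /(Fsq_adj1E _ _ h2) [u [v Ec]]]; split => //.
    pose M := mkmx [:: [:: u + a*v; v - a*v; 0; 0];
                       [:: a*v; u - a*v; 0; 0];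
                       [:: 0; 0; u; v];
                       [:: 0; 0; a*v; u]].
    have HM : forall x y, c * bform beta x y = bform beta (x *m M) (y *m M).
      move=> x y; rewrite !bE !mulE4 /M /mkmx !mxE /= Ec.
      set x0 := x 0 o0; set x1 := x 0 o1; set x2 := x 0 o2; set x3 := x 0 o3.
      set y0 := y 0 o0; set y1 := y 0 o1; set y2 := y 0 o2; set y3 := y 0 o3.
      by apply: (@char2_eq _ _ _ (- (a * b * u * v * x2 * y3) - (a * b * u * v * x3 * y2) - (a * u * v * x0 * y0) - (a * u * v * x0 * y1) - (a * u * v * x1 * y0) - (a^+2 * u * v * x0 * y0) + (a^+2 * u * v * x1 * y1) + (a^+2 * v^+2 * x0 * y0) - (a^+3 * v^+2 * x0 * y0) - (a^+3 * v^+2 * x0 * y1) - (a^+3 * v^+2 * x1 * y0) - (a^+3 * v^+2 * x1 * y1))) => //; ring.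
    exists M; split; first exact: (unitP c M cn (fun x => HM x x)).
    by move=> x y; rewrite bformZ HM.
split.
- move=> x nx; apply/eqP => E; move: nx; by rewrite (aniso x E) eqxx.
- exact: P2.
- exact: P3.
split.
- move=> c [cn [M [Mu HM]]]; split => //; exists M; split => // x.
  by rewrite /q_of /= -bformZ HM.
exists b; split.
- apply/P2; split => //; apply/Fsq_adj2E => //; exists 0, 0, 1, 0; rewrite /Q; ring.
- move/P3 => [_ /(Fsq_adj1E _ _ h2) [u [v Eb]]].
  have E : Q a b u v 1 0 = (u^+2 + a*v^+2) + b by rewrite /Q; ring.
  rewrite -Eb in E.
  have : Q a b u v 1 0 = 0.
    by rewrite E; apply: (@char2_eq _ _ _ b) => //; ring.
  by move=> /Ind [_ _ /eqP]; rewrite oner_eq0.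
Qed.
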